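(* Let $p\ge 1$, $\varepsilon>0$ and integers $k,l\ge 1$. There exists an integer $N\ge 1$ such that for every linear subspace $F$ of $\ell_p^N$ with $\dim F\ge N-k$, there exist $l$ vectors $y_1,\dots,y_l\in\ell_p^N$ of norm one, with pairwise disjoint supports, such that $\operatorname{dist}(y_j,F)\le\varepsilon$ for $1\le j\le l$.
   Context: $\ell_p^N$ is $\mathbb{R}^N$ with the norm $\|x\|_p=(\sum_{i=1}^N|x_i|^p)^{1/p}$; the support of $x$ is $\{i: x_i\neq 0\}$; distances are measured in $\|\cdot\|_p$. *)

(* Defs.v *)
From HB Require Import structures.
From mathcomp Require Import all_boot all_order all_algebra.
From mathcomp Require Import all_classical all_reals.
From mathcomp Require Import exp.
Set Implicit Arguments. Unset Strict Implicit. Unset Printing Implicit Defensive.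
Import Order.TTheory GRing.Theory Num.Theory.
Local Open Scope ring_scope.
Local Open Scope classical_set_scope.

Definition lpnorm (R : realType) (p : R) (N : nat) (x : 'rV[R]_N) : R :=
  (\sum_(i < N) `|x ord0 i| `^ p) `^ (p^-1).

Definition lpdist (R : realType) (p : R) (N : nat) (y : 'rV[R]_N)
  (F : {vspace 'rV[R]_N}) : R :=
  inf [set lpnorm p (y - z) | z in [set z | z \in F]].

Definition supp (R : realType) (N : nat) (x : 'rV[R]_N) : {set 'I_N} :=
  [set i | x ord0 i != 0].

(* Main.v *)
Require Import Defs.
From HB Require Import structures.
From mathcomp Require Import all_boot all_order all_algebra.
From mathcomp Require Import all_classical all_reals.
From mathcomp Require Import exp.
From mathcomp Require Import zify.
Import Order.TTheory GRing.Theory Num.Theory.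
Local Open Scope ring_scope.

Section Blocks.
Variables (R : realType) (m N j : nat).

Definition gblk (x : 'rV[R]_m.+1) : 'rV[R]_N :=
  \row_i (if (i %/ m.+1 == j)%N then x ord0 (inord (i %% m.+1)) else 0).

Lemma gblk_lin : linear gblk.
Proof.
move=> a u v; apply/rowP => i; rewrite !mxE.
by case: ifP => _; rewrite ?mulr0 ?addr0 // !mxE.
Qed.

HB.instance Definition _ := GRing.isLinear.Build R 'rV[R]_m.+1 'rV[R]_N _ gblk gblk_lin.

Lemma gblk_inj : (j < N %/ m.+1)%N -> injective gblk.
Proof.
move=> hj u v /rowP huv; apply/rowP => t.
have hi : (j * m.+1 + t < N)%N.
  have : (j.+1 * m.+1 <= N)%N.
    by rewrite -leq_divRL.
  rewrite mulSn => h; apply: leq_trans h.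
  by rewrite addnC ltn_add2r ltn_ord.
have := huv (Ordinal hi); rewrite !mxE /=.
rewrite divnMDl // divn_small // addn0.
case: ifP => [_|/eqP //]; rewrite modnMDl modn_small //.
have -> : inord t = t :> 'I_m.+1 by apply: val_inj; rewrite /= inordK.
by have -> : ord0 = 0 :> 'I_1 by apply: val_inj.
Qed.

Lemma gblk_supp (x : 'rV[R]_m.+1) i : gblk x ord0 i != 0 -> (i %/ m.+1 = j)%N.
Proof. by rewrite mxE; case: (_ =P j) => [//|_]; rewrite eqxx. Qed.

End Blocks.

Section Norm.
Variables (R : realType) (p : R) (N : nat).
Hypothesis hp : 1 <= p.

Lemma lpnorm_ge0 (x : 'rV[R]_N) : 0 <= lpnorm p x.
Proof. exact: powR_ge0. Qed.

Lemma lpnorm0 : lpnorm p (0 : 'rV[R]_N) = 0.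
Proof.
rewrite /lpnorm big1 ?powR0 //.
  by rewrite invr_eq0; apply/eqP => p0; move: hp; rewrite p0 ler10.
move=> i _; rewrite mxE normr0 powR0 //.
by apply/eqP => p0; move: hp; rewrite p0 ler10.
Qed.

Lemma lpnorm_gt0 (x : 'rV[R]_N) : x != 0 -> 0 < lpnorm p x.
Proof.
move=> /eqP hx; have /existsP [i hi] : [exists i, x ord0 i != 0].
  rewrite -[X in is_true X]negbK negb_exists; apply/negP => /forallP h.
  apply: hx; apply/rowP => i.
  rewrite mxE; have := h i; rewrite negbK => /eqP.
  by have -> : ord0 = 0 :> 'I_1 by apply: val_inj.
apply: powR_gt0; rewrite (bigD1 i) //=.
apply: (@lt_le_trans _ _ (`|x ord0 i| `^ p)).
  by apply: powR_gt0; rewrite normr_gt0.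
by rewrite lerDl sumr_ge0 // => ? _; apply: powR_ge0.
Qed.

Lemma lpnormZ (c : R) (x : 'rV[R]_N) : 0 <= c -> lpnorm p (c *: x) = c * lpnorm p x.
Proof.
move=> hc; rewrite /lpnorm.
under eq_bigr => i _ do rewrite mxE normrM ger0_norm // powRM //.
rewrite -mulr_sumr powRM ?sumr_ge0 ?powR_ge0 //; last by move=> ? _; apply: powR_ge0.
rewrite -powRrM divff ?powRr1 //.
by apply/eqP => p0; move: hp; rewrite p0 ler10.
Qed.

End Norm.

Theorem lemmaV2 (R : realType) (p eps : R) (k l : nat) :
  1 <= p -> 0 < eps -> (1 <= k)%N -> (1 <= l)%N ->
  exists N : nat, (1 <= N)%N /\
    forall F : {vspace 'rV[R]_N}, (N - k <= \dim F)%N ->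
      exists y : 'I_l -> 'rV[R]_N,
        (forall j, lpnorm p (y j) = 1) /\
        (forall i j, i != j -> [disjoint supp (y i) & supp (y j)]) /\
        (forall j, lpdist p (y j) F <= eps).
Proof.
move=> hp he hk hl; exists (l * k.+1)%N; split; first by rewrite muln_gt0 hl.
move=> F hF.
pose B (j : nat) : {vspace 'rV[R]_(l * k.+1)} :=
  (linfun (@gblk R k (l * k.+1) j) @: fullv)%VS.
pose v (j : 'I_l) := vpick (F :&: B j)%VS.
have hv : forall j : 'I_l, v j != 0.
  move=> j; rewrite vpick0 -dimv_eq0 -lt0n.
  have hB : \dim (B j) = k.+1.
    have /eqP hker : lker (linfun (@gblk R k (l * k.+1) j)) == 0%VS.
      apply/lker0P => u w; rewrite !lfunE /=; apply: gblk_inj.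
      by rewrite mulnK.
    rewrite limg_dim_eq ?hker ?capv0 // dimvf dim_matrix; lia.
  have := dimv_sum_cap F (B j).
  have : (\dim (F + B j) <= l * k.+1)%N.
    rewrite (leq_trans (dimvS (subvf _))) // dimvf dim_matrix; lia.
  rewrite hB; move: hF; rewrite -(leq_add2r k.+1).
  have -> : (l * k.+1 - k + k.+1 = l * k.+1 + 1)%N.
    have : (k < l * k.+1)%N by rewrite (leq_trans (ltnSn k)) // leq_pmull.
    lia.
  lia.
have hvF : forall j, v j \in F by move=> j; have /memv_capP[] := memv_pick (F :&: B j)%VS.
have hvB : forall j, v j \in B j by move=> j; have /memv_capP[] := memv_pick (F :&: B j)%VS.
exists (fun j => (lpnorm p (v j))^-1 *: v j); split; [|split].
- move=> j; rewrite lpnormZ // ?invr_ge0 ?lpnorm_ge0 // mulVf //.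
  by rewrite gt_eqF // lpnorm_gt0.
- move=> i j hij; apply/pred0P => t /=; rewrite !inE !mxE.
  apply/negP => /andP[].
  rewrite !mulf_eq0 !negb_or => /andP[_ hi] /andP[_ hj].
  move: (hvB i) (hvB j) => /memv_imgP[ui _ ei] /memv_imgP[uj _ ej].
  move: hi hj; rewrite ei ej !lfunE /= => /gblk_supp hi /gblk_supp hj.
  apply: (negP hij); apply/eqP; apply: val_inj; rewrite /= -hi -hj //.
- move=> j; apply: (@le_trans _ _ 0); last exact: ltW.
  have [w hw ->] : exists2 w, w \in F & (lpnorm p (v j))^-1 *: v j = w.
    by exists ((lpnorm p (v j))^-1 *: v j) => //; rewrite memvZ.
  rewrite /lpdist.
  apply: (ge_inf (E := [set lpnorm p (w - z) | z in [set z | z \in F]])).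
    by exists 0 => _ [z _ <-]; apply: lpnorm_ge0.
  by exists w => //; rewrite subrr lpnorm0.
Qed.
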